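(* Let $\mathbb{A}=(\mathbb{L},(\lozenge_i)_{i\in\mathsf{Ag}},(\Box_i)_{i\in\mathsf{Ag}})$ be an epistemic Heyting algebra and $a\in\mathbb{A}$. Then the pseudo-quotient algebra $\mathbb{A}^a$ is an epistemic Heyting algebra.
   Context: Fix a set $\mathsf{Ag}$ of agents. A monadic Heyting algebra is a Heyting algebra $\mathbb{L}$ with, for each $i\in\mathsf{Ag}$, monotone unary operations $\lozenge_i,\Box_i$ such that for all $a,b$: $a\leq\lozenge_i a$; $\Box_i a\leq a$; $\lozenge_i(a\vee b)\leq\lozenge_i a\vee\lozenge_i b$; $\Box_i(a\to b)\leq\Box_i a\to\Box_i b$; $\lozenge_i a\leq\Box_i\lozenge_i a$; $\lozenge_i\Box_i a\leq\Box_i a$; $\Box_i(a\to b)\leq\lozenge_i a\to\lozenge_i b$; $\lozenge_i\bot\leq\bot$; $\top\leq\Box_i\top$. An epistemic Heyting algebra is a finite monadic Heyting algebra with $\lozenge_i a\vee\neg\lozenge_i a=\top$ for all $i,a$. The pseudo-quotient algebra $\mathbb{A}^a=(\mathbb{L}/{\cong_a},(\lozenge^a_i),(\Box^a_i))$: $b\cong_a c$ iff $b\wedge a=c\wedge a$; $\mathbb{L}/{\cong_a}$ is the quotient Heyting algebra (writing $[c]$ for the class of $c$); and $\lozenge^a_i[b]=[\lozenge_i(b\wedge a)]$, $\Box^a_i[b]=[\Box_i(a\to b)]$. *)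

(* Defs.v *)
From mathcomp Require Import all_boot.
Set Implicit Arguments. Unset Strict Implicit. Unset Printing Implicit Defensive.

Record HAops (T : Type) := HAOps {
  meet : T -> T -> T; join : T -> T -> T; imp : T -> T -> T; top : T; bot : T }.

Definition hle T (o : HAops T) (x y : T) : Prop := meet o x y = x.
Definition hneg T (o : HAops T) (x : T) : T := imp o x (bot o).

Definition is_HA T (o : HAops T) : Prop :=
  (forall x y z, meet o x (meet o y z) = meet o (meet o x y) z) /\
      (forall x y z, join o x (join o y z) = join o (join o x y) z) /\
      (forall x y, meet o x y = meet o y x) /\
      (forall x y, join o x y = join o y x) /\
      (forall x y, meet o x (join o x y) = x) /\
      (forall x y, join o x (meet o x y) = x) /\
      (forall x, hle o (bot o) x /\ hle o x (top o)) /\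
      (forall a b c, hle o (meet o c a) b <-> hle o c (imp o a b)).

Record MHAops (Ag T : Type) := MHAOps {
  ha : HAops T; dia : Ag -> T -> T; box : Ag -> T -> T }.

Definition is_MHA Ag T (A : MHAops Ag T) : Prop :=
  let o := ha A in let le := hle o in
  is_HA o /\
  forall i : Ag,
  (forall a b, le a b -> le (dia A i a) (dia A i b)) /\
      (forall a b, le a b -> le (box A i a) (box A i b)) /\
      (forall a, le a (dia A i a)) /\
      (forall a, le (box A i a) a) /\
      (forall a b, le (dia A i (join o a b)) (join o (dia A i a) (dia A i b))) /\
      (forall a b, le (box A i (imp o a b)) (imp o (box A i a) (box A i b))) /\
      (forall a, le (dia A i a) (box A i (dia A i a))) /\
      (forall a, le (dia A i (box A i a)) (box A i a)) /\
      (forall a b, le (box A i (imp o a b)) (imp o (dia A i a) (dia A i b))) /\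
      le (dia A i (bot o)) (bot o) /\
      le (top o) (box A i (top o)).

Definition is_EHA Ag (T : finType) (A : MHAops Ag T) : Prop :=
  is_MHA A /\
  forall i a, join (ha A) (dia A i a) (hneg (ha A) (dia A i a)) = top (ha A).

Section PseudoQuotient.
Variables (Ag : Type) (L : finType) (A : MHAops Ag L) (a : L).
Let o := ha A.

Definition cls (b : L) : {set L} := [set c | meet o c a == meet o b a].

(* carrier of L/≅_a: the set of equivalence classes *)
Definition qcar := {X : {set L} | [exists b, X == cls b]}.

Lemma cls_qcar (b : L) : [exists b', cls b == cls b'].
Proof. by apply/existsP; exists b. Qed.

Definition qcls (b : L) : qcar := exist _ (cls b) (cls_qcar b).

Definition rep (X : qcar) : L := odflt (top o) [pick x in val X].

Definition quot_ops : HAops qcar :=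
  HAOps (fun X Y => qcls (meet o (rep X) (rep Y)))
        (fun X Y => qcls (join o (rep X) (rep Y)))
        (fun X Y => qcls (imp o (rep X) (rep Y)))
        (qcls (top o)) (qcls (bot o)).

Definition pseudo_quotient : MHAops Ag qcar :=
  MHAOps quot_ops
    (fun i X => qcls (dia A i (meet o (rep X) a)))
    (fun i X => qcls (box A i (imp o a (rep X)))).
End PseudoQuotient.

(* Main.v *)
Require Import Defs.
From mathcomp Require Import all_boot.
Set Implicit Arguments. Unset Strict Implicit. Unset Printing Implicit Defensive.

Section Main.
Variables (Ag : Type) (L : finType) (A : MHAops Ag L) (a : L).
Local Notation o := (ha A).
Local Notation m := (meet o).
Local Notation j := (join o).
Local Notation im := (imp o).
Local Notation le := (hle o).
Hypotheses (mA : forall x y z, m x (m y z) = m (m x y) z)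
  (jA : forall x y z, j x (j y z) = j (j x y) z)
  (mC : forall x y, m x y = m y x) (jC : forall x y, j x y = j y x)
  (ab1 : forall x y, m x (j x y) = x) (ab2 : forall x y, j x (m x y) = x)
  (bt : forall x, le (bot o) x /\ le x (top o))
  (res : forall a b c, le (m c a) b <-> le c (im a b)).

Lemma resI x y z : le (m z x) y -> le z (im x y). Proof. exact: (proj1 (res _ _ _)). Qed.
Lemma resE x y z : le z (im x y) -> le (m z x) y. Proof. exact: (proj2 (res _ _ _)). Qed.
Lemma mxx x : m x x = x. Proof. by have := ab1 x (m x x); rewrite ab2. Qed.
Lemma leR x : le x x. Proof. exact: mxx. Qed.
Lemma leT x y z : le x y -> le y z -> le x z.
Proof. rewrite /hle => h1 h2; by rewrite -{1}h1 -mA h2 h1. Qed.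
Lemma leA x y : le x y -> le y x -> x = y.
Proof. rewrite /hle => h1 h2; by rewrite -h1 mC h2. Qed.
Lemma lemml x y : le (m x y) x.
Proof. by rewrite /hle -mA (mC y x) mA mxx. Qed.
Lemma lemmr x y : le (m x y) y.
Proof. by rewrite /hle -mA mxx. Qed.
Lemma lem x y z : le z x -> le z y -> le z (m x y).
Proof. rewrite /hle => h1 h2; by rewrite mA h1 h2. Qed.
Lemma lejE x y : le x y <-> j x y = y.
Proof.
split => h. by rewrite -h jC mC ab2.
by rewrite /hle -h ab1.
Qed.
Lemma lejl x y : le x (j x y). Proof. exact: ab1. Qed.
Lemma lejr x y : le y (j x y). Proof. rewrite jC; exact: lejl. Qed.
Lemma lej x y z : le x z -> le y z -> le (j x y) z.
Proof. move=> /lejE h1 /lejE h2; apply/lejE; by rewrite -jA h2 h1. Qed.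
Lemma le0 x : le (bot o) x. Proof. exact: (bt x).1. Qed.
Lemma le1 x : le x (top o). Proof. exact: (bt x).2. Qed.
Lemma mp x y : le (m (im x y) x) y. Proof. apply: resE; exact: leR. Qed.
Lemma lemM x y z : le x y -> le (m x z) (m y z).
Proof. move=> h; apply: lem; [exact: leT (lemml _ _) h | exact: lemmr]. Qed.

Ltac mt := match goal with
 | |- hle _ ?x ?x => apply: leR
 | |- hle _ _ (meet _ _ _) => apply: lem; mt
 | |- hle _ (meet _ ?x ?y) _ =>
     first [apply: leT (lemml x y) _; mt | apply: leT (lemmr x y) _; mt]
 end.

Lemma distr x y z : m (j x y) z = j (m x z) (m y z).
Proof.
apply: leA.
  apply: resE; apply: lej; apply: resI; [exact: lejl | exact: lejr].
apply: lej; apply: lemM; [exact: lejl | exact: lejr].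
Qed.

Lemma impm x y : m (im x y) a = m (im (m x a) (m y a)) a.
Proof.
apply: leA; apply: lem; try exact: lemmr.
  apply: resI; apply: lem.
    apply: leT _ (mp x y); mt.
  mt.
apply: resI; apply: leT _ (lemml y a).
apply: leT _ (mp (m x a) (m y a)); mt.
Qed.

Lemma impa x : im a x = im a (m x a).
Proof.
apply: leA; apply: resI.
  apply: lem; [exact: mp | exact: lemmr].
apply: leT (mp _ _) _; exact: lemml.
Qed.

Local Notation qc := (qcls A a).
Local Notation Q := (quot_ops A a).

Lemma qcls_eq x y : qc x = qc y <-> m x a = m y a.
Proof.
split=> h.
  have: x \in cls A a y by rewrite -[cls A a y]/(val (qc y)) -h inE.
  by rewrite inE => /eqP.
apply: val_inj => /=; apply/setP => c; by rewrite !inE h.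
Qed.

Lemma qclsP (X : qcar A a) : exists b, X = qc b.
Proof.
case: X => X p; case/existsP: (p) => b /eqP e; exists b.
by apply: val_inj => /=.
Qed.

Lemma rep_qcls b : m (@rep _ _ A a (qc b)) a = m b a.
Proof.
rewrite /rep /=; case: pickP => [x|] /=.
  by rewrite inE => /eqP.
by move/(_ b); rewrite inE eqxx.
Qed.

Lemma qmeet x y : meet Q (qc x) (qc y) = qc (m x y).
Proof.
apply/qcls_eq.
have e : forall u v, m (m u v) a = m (m u a) (m v a).
  move=> u v; apply: leA; mt.
by rewrite e (e x) !rep_qcls.
Qed.

Lemma qjoin x y : join Q (qc x) (qc y) = qc (j x y).
Proof. by apply/qcls_eq; rewrite !distr !rep_qcls. Qed.

Lemma qimp x y : imp Q (qc x) (qc y) = qc (im x y).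
Proof. by apply/qcls_eq; rewrite impm (impm x) !rep_qcls. Qed.

Lemma qle x y : hle Q (qc x) (qc y) <-> le (m x a) y.
Proof.
change (meet Q (qc x) (qc y) = qc x <-> le (m x a) y).
rewrite qmeet; split => [/qcls_eq h | h]; last apply/qcls_eq.
  rewrite -h; mt.
apply: leA. mt.
apply: lem; [apply: lem; [exact: lemml | exact: h] | exact: lemmr].
Qed.

Lemma qdia i x : qc (dia A i (m (@rep _ _ A a (qc x)) a)) = qc (dia A i (m x a)).
Proof. by rewrite rep_qcls. Qed.

Lemma qbox i x : qc (box A i (im a (@rep _ _ A a (qc x)))) = qc (box A i (im a x)).
Proof. by rewrite impa rep_qcls -impa. Qed.


Local Notation PQ := (pseudo_quotient A a).
Lemma qdiaE i x : dia PQ i (qc x) = qc (dia A i (m x a)).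
Proof. exact: qdia. Qed.
Lemma qboxE i x : box PQ i (qc x) = qc (box A i (im a x)).
Proof. exact: qbox. Qed.
Lemma qleE x y : hle (ha PQ) (qc x) (qc y) <-> le (m x a) y.
Proof. exact: qle. Qed.

Ltac qi X := let x := fresh "x" in case: (qclsP X) => x ->.

Lemma quotHA : is_HA (ha PQ).
Proof.
refine (conj _ (conj _ (conj _ (conj _ (conj _ (conj _ (conj _ _))))))).
- move=> X Y Z; qi X; qi Y; qi Z; by rewrite (qmeet x0) (qmeet x x0) !qmeet mA.
- move=> X Y Z; qi X; qi Y; qi Z; by rewrite (qjoin x0) (qjoin x x0) !qjoin jA.
- move=> X Y; qi X; qi Y; by rewrite !qmeet mC.
- move=> X Y; qi X; qi Y; by rewrite !qjoin jC.
- move=> X Y; qi X; qi Y; by rewrite (qjoin x) qmeet ab1.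
- move=> X Y; qi X; qi Y; by rewrite (qmeet x) qjoin ab2.
- move=> X; qi X; split; apply/qleE; [apply: leT (lemml _ _) (le0 _) | exact: le1].
- move=> X Y Z; qi X; qi Y; qi Z; rewrite (qmeet x1) (qimp x); split => /qleE h; apply/qleE.
    apply: resI; apply: leT _ h; mt.
  apply: leT _ (mp _ _); apply: lem; [apply: leT _ h; mt | mt].
Qed.

Lemma quotEHA : is_MHA A -> is_EHA A -> is_EHA PQ.
Proof.
case=> _ HM [_ HE].
split; first split; first exact: quotHA.
  move=> i.
  case: (HM i) => dmono [bmono [dinc [bdec [djoin [bK [dbd [dbb [bdK [dbot btop]]]]]]]]].
  refine (conj _ (conj _ (conj _ (conj _ (conj _ (conj _ (conj _ (conj _ (conj _ (conj _ _)))))))))).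
  - move=> X Y; qi X; qi Y; move/qleE => h; rewrite !qdiaE; apply/qleE.
    apply: leT (lemml _ _) (dmono _ _ _); apply: lem; [exact: h | exact: lemmr].
  - move=> X Y; qi X; qi Y; move/qleE => h; rewrite !qboxE; apply/qleE.
    apply: leT (lemml _ _) (bmono _ _ _); apply: resI; apply: leT _ h.
    apply: lem; [exact: mp | exact: lemmr].
  - move=> X; qi X; rewrite qdiaE; apply/qleE; exact: dinc.
  - move=> X; qi X; rewrite qboxE; apply/qleE.
    apply: leT (lemM _ (bdec _)) (mp a x).
  - move=> X Y; qi X; qi Y; rewrite (qjoin x) !qdiaE qjoin; apply/qleE.
    rewrite distr; apply: leT (lemml _ _) (djoin _ _).
  - move=> X Y; qi X; qi Y; rewrite (qimp x) !qboxE qimp; apply/qleE.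
    apply: leT (lemml _ _) (leT (bmono _ _ _) (bK _ _)).
    apply: resI; apply: resI.
    apply: leT _ (mp x x0).
    apply: lem.
      apply: leT _ (mp a (im x x0)); mt.
    apply: leT _ (mp a x); mt.
  - move=> X; qi X; rewrite qdiaE qboxE; apply/qleE.
    apply: leT (lemml _ _) (leT (dbd _) (bmono _ _ _)).
    apply: resI; exact: lemml.
  - move=> X; qi X; rewrite qboxE qdiaE; apply/qleE.
    apply: leT (lemml _ _) (leT (dmono _ _ (lemml _ _)) (dbb _)).
  - move=> X Y; qi X; qi Y; rewrite (qimp x) qboxE !qdiaE qimp; apply/qleE.
    apply: leT (lemml _ _) (leT (bmono _ _ _) (bdK _ _)).
    apply: resI; apply: lem; last by mt.
    apply: leT _ (mp x x0).
    apply: lem.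
      apply: leT _ (mp a (im x x0)); mt.
    mt.
  - have e : m (bot o) a = bot o by apply: leA; [exact: lemml | exact: le0].
    change (hle (ha PQ) (dia PQ i (qc (bot o))) (qc (bot o))); rewrite qdiaE.
    apply/qleE; rewrite e; apply: leT (lemml _ _) dbot.
  - have e : im a (top o) = top o by apply: leA; [exact: le1 | apply: resI; exact: le1].
    change (hle (ha PQ) (qc (top o)) (box PQ i (qc (top o)))); rewrite qboxE.
    apply/qleE; rewrite e; apply: leT (lemml _ _) btop.
move=> i X; qi X; rewrite /hneg qdiaE.
change (join (ha PQ) (qc (dia A i (m x a))) (imp (ha PQ) (qc (dia A i (m x a))) (qc (bot o))) = qc (top o)).
rewrite (qimp (dia A i (m x a))) qjoin.
by have := HE i (m x a); rewrite /hneg => ->.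
Qed.

End Main.

Theorem proposition8 (Ag : Type) (L : finType) (A : MHAops Ag L) (a : L) :
  is_EHA A -> is_EHA (pseudo_quotient A a).
Proof.
move=> H; have H' := H; case: H' => [[HA HM] _].
case: HA => [mA [jA [mC [jC [ab1 [ab2 [bt res]]]]]]].
exact: (@quotEHA _ _ A a mA jA mC jC ab1 ab2 bt res H.1 H).
Qed.
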